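(* In the segregation process, suppose that $F$ is an $x$-firewall incubator (in the initial configuration) and there exist a left-pseudo-transcript and a right-pseudo-transcript of $F$ all of whose partial sums are non-negative. Then $F$ becomes an $x$-firewall, i.e. at some time every node of $F$ is occupied by an individual of type $x$.
   Context: Segregation process: the nodes of an $n$-cycle are indexed mod $n$; at every time there is a bijection between $n$ individuals and the nodes, each individual having type $x$ or $o$; initially each node independently gets label $x$ or $o$ with probability $1/2$. With sign $+1$ for $x$ and $-1$ for $o$, the $x$-bias $\beta_t(i)$ of node $i$ at time $t$ is the sum of the signs of the labels of nodes $i-w,\dots,i+w$. An $x$-individual at $i$ is happy iff $\beta_t(i)>0$, an $o$-individual iff $\beta_t(i)<0$; otherwise unhappy. At each time step two individuals are chosen uniformly at random (a proposed swap); if both are unhappy and of opposite types they exchange nodes, otherwise nothing changes. A block is a sequence of consecutive nodes; a firewall is a block of at least $w+1$ consecutive nodes with identical labels. An $x$-firewall incubator is a block $F$ made up of consecutive blocks $D_L,I,D_R$ (left to right) such that $|D_L|=|D_R|=w+1$, $\beta_0(i)>\sqrt w$ for all $i\in F$, the minimum of $\beta_0$ over $D_L$ is attained at its left endpoint and the minimum of $\beta_0$ over $D_R$ is attained at its right endpoint. $A_L$, $A_R$ denote the blocks of $w$ nodes immediately to the left and right of $F$. The satisfaction time of an individual is the first time at which it is selected for a proposed swap together with an unhappy individual of the opposite type ($\infty$ if none); an individual is impatient at time $t$ if it is unhappy at time $t$ and $t$ is at most its satisfaction time. A left attacking $x$ is an $x$-individual in $A_L$ at time $0$; a left defending $o$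 is an $o$-individual in $D_L$ at time $0$; these are the left combatants (right combatants defined analogously with $A_R,D_R$). The left-transcript is the sign sequence obtained by listing the left combatants in reverse (decreasing) order of satisfaction time and writing $+1$ for each attacking $x$ and $-1$ for each defending $o$; the right-transcript is defined analogously. If there exists a time $t_0$ at which no individual in $F$ is impatient, any sign sequence obtained from the left- (resp. right-) transcript by permuting the signs associated to individuals whose satisfaction time is after $t_0$, while fixing all other signs, is a left- (resp. right-) pseudo-transcript. The $k$-th partial sum of a sequence is the sum of its first $k$ elements. *)

(* Defs.v *)
(* Deterministic description of the segregation process
   driven by an arbitrary initial labelling and an arbitrary sequence of
   proposed swaps. *)
From HB Require Import structures.
From mathcomp Require Import all_boot all_order all_algebra.
Set Implicit Arguments. Unset Strict Implicit. Unset Printing Implicit Defensive.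
Import Order.TTheory GRing.Theory Num.Theory.
Local Open Scope ring_scope.

(* Conventions.
   - Nodes of the n-cycle are 0..n-1; a node may be given by any integer k,
     meaning node (k mod n).
   - Individuals are named 0..n-1: individual a initially sits at node a,
     and has the fixed type [typ a] (true = x, false = o).
   - An occupancy [o : nat -> nat] maps a node to the individual on it. *)

Definition sgnb (b : bool) : int := if b then 1 else -1.

Definition node (n : nat) (k : int) : nat := absz (k %% n%:Z)%Z.

Definition lab (n : nat) (typ : nat -> bool) (o : nat -> nat) (k : int) : bool :=
  typ (o (node n k)).

Definition bias (n w : nat) (typ : nat -> bool) (o : nat -> nat) (i : int) : int :=
  \sum_(j < (2 * w).+1) sgnb (lab n typ o (i - w%:Z + j%:Z)).

Definition unhappy_node (n w : nat) (typ : nat -> bool) (o : nat -> nat) (i : int) : bool :=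
  if lab n typ o i then bias n w typ o i <= 0 else 0 <= bias n w typ o i.

Definition unhappy_ind (n w : nat) (typ : nat -> bool) (o : nat -> nat) (a : nat) : bool :=
  [exists k : 'I_n, (o k == a) && unhappy_node n w typ o (k%:Z)].

Definition swap_occ (o : nat -> nat) (a b : nat) : nat -> nat :=
  fun k => if o k == a then b else if o k == b then a else o k.

Definition step (n w : nat) (typ : nat -> bool) (o : nat -> nat) (p : nat * nat) : nat -> nat :=
  if [&& unhappy_ind n w typ o p.1, unhappy_ind n w typ o p.2 & typ p.1 != typ p.2]
  then swap_occ o p.1 p.2 else o.

Fixpoint occ (n w : nat) (typ : nat -> bool) (prop : nat -> nat * nat) (t : nat) : nat -> nat :=
  match t with
  | 0 => id
  | t'.+1 => step n w typ (occ n w typ prop t') (prop t')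
  end.

Definition satisfied_at (n w : nat) (typ : nat -> bool) (prop : nat -> nat * nat)
    (t : nat) (a : nat) : bool :=
  let o := occ n w typ prop t in
  let p := prop t in
  ((p.1 == a) && unhappy_ind n w typ o p.2 && (typ p.2 != typ a)) ||
  ((p.2 == a) && unhappy_ind n w typ o p.1 && (typ p.1 != typ a)).

Definition sat_by n w typ prop (t a : nat) : bool :=
  [exists s : 'I_t.+1, satisfied_at n w typ prop s a].

(* satisfaction time of a <= satisfaction time of b (infinity allowed) *)
Definition sat_le n w typ prop (a b : nat) : Prop :=
  forall t, sat_by n w typ prop t b -> sat_by n w typ prop t a.

Definition impatient n w typ prop (t a : nat) : bool :=
  unhappy_ind n w typ (occ n w typ prop t) a &&
  ~~ [exists s : 'I_t, satisfied_at n w typ prop s a].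

Definition in_block (n : nat) (s : int) (m : nat) (k : nat) : bool :=
  [exists j : 'I_m, k == node n (s + j%:Z)].

(* x-firewall incubator F = nodes s, ..., s+m-1, with D_L = first w+1 nodes,
   D_R = last w+1 nodes, evaluated on the initial configuration (occupancy id).
   beta_0(i) > sqrt w is written as beta_0(i) > 0 /\ beta_0(i)^2 > w
   (equivalent for an integer beta_0(i)). *)
Definition x_firewall_incubator (n w : nat) (typ : nat -> bool) (s : int) (m : nat) : Prop :=
  let b := bias n w typ id in
  [/\ (2 * w + 2 <= m)%N,
      (forall j : nat, (j < m)%N ->
          0 < b (s + j%:Z) /\ w%:Z < b (s + j%:Z) ^+ 2),
      (forall j : nat, (j <= w)%N -> b s <= b (s + j%:Z)) &
      (forall j : nat, (j <= w)%N ->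
          b (s + m%:Z - 1) <= b (s + m%:Z - 1 - j%:Z))].

(* left combatants: attacking x's in A_L (w nodes left of F) and defending
   o's in D_L, at time 0 *)
Definition left_combatant (n w : nat) (typ : nat -> bool) (s : int) (m : nat) (a : nat) : bool :=
  (in_block n (s - w%:Z) w a && typ a) || (in_block n s w.+1 a && ~~ typ a).

Definition right_combatant (n w : nat) (typ : nat -> bool) (s : int) (m : nat) (a : nat) : bool :=
  (in_block n (s + m%:Z) w a && typ a) ||
  (in_block n (s + m%:Z - w.+1%:Z) w.+1 a && ~~ typ a).

Definition no_impatient_in_F n w typ prop (s : int) (m t0 : nat) : Prop :=
  forall k : nat, (k < n)%N -> in_block n s m k ->
    ~~ impatient n w typ prop t0 (occ n w typ prop t0 k).

(* sq is a pseudo-transcript for the set of combatants comb: L lists the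
   combatants (each once) in (weakly) decreasing order of satisfaction time,
   and sq is obtained from the signs of L by permuting the signs of the
   individuals whose satisfaction time is after t0. *)
Definition pseudo_transcript n w typ prop (s : int) (m : nat)
    (comb : nat -> bool) (sq : seq int) : Prop :=
  exists (t0 : nat) (L : seq nat),
    [/\ no_impatient_in_F n w typ prop s m t0,
        uniq L,
        (forall a, (a \in L) = comb a),
        (forall i j : nat, (i < j < size L)%N ->
            sat_le n w typ prop (nth 0%N L j) (nth 0%N L i)) &
        let sg := [seq sgnb (typ a) | a <- L] in
        let mk := [seq ~~ sat_by n w typ prop t0 a | a <- L] in
        [/\ size sq = size L,
            perm_eq (mask mk sq) (mask mk sg) &
            mask [seq ~~ b | b <- mk] sq = mask [seq ~~ b | b <- mk] sg]].

Definition partial_sums_nonneg (sq : seq int) : Prop :=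
  forall k : nat, (k <= size sq)%N -> 0 <= \sum_(i < k) sq`_i.

(* Main.v *)
Require Import Defs.
From HB Require Import structures.
From mathcomp Require Import all_boot all_order all_algebra.
From mathcomp Require Import ring lra zify.
Import Order.TTheory GRing.Theory Num.Theory.
Local Open Scope ring_scope.

Section Dyn.
Variables (n w : nat) (typ : nat -> bool) (prop : nat -> nat * nat).
Hypothesis n_gt0 : (0 < n)%N.
Hypothesis Hprop : forall t, (prop t).1 != (prop t).2.

Lemma nodeZ x : ((node n x)%:Z = x %% n)%Z.
Proof. rewrite /node gez0_abs // modz_ge0 //; lia. Qed.

Lemma node_lt x : (node n x < n)%N.
Proof.
have := ltz_pmod x (_ : 0 < n%:Z); rewrite -nodeZ ltz_nat; apply; lia.
Qed.

Lemma node_nat (k : nat) : (k < n)%N -> node n k%:Z = k.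
Proof. by move=> Hk; rewrite /node modz_small //; apply/andP; split; lia. Qed.

Lemma node_add x y : node n ((node n x)%:Z + y) = node n (x + y).
Proof. by rewrite /node nodeZ modzDml. Qed.

Lemma bias_node o x : bias n w typ o (node n x)%:Z = bias n w typ o x.
Proof.
apply: eq_bigr => j _; rewrite /lab.
by rewrite -!addrA node_add.
Qed.

Lemma lab_nat o (k : nat) : (k < n)%N -> lab n typ o k%:Z = typ (o k).
Proof. by move=> Hk; rewrite /lab node_nat. Qed.

Lemma tr_invol (a b : nat) : a != b ->
  cancel (fun z => if z == a then b else if z == b then a else z)
         (fun z => if z == a then b else if z == b then a else z).
Proof.
move=> Hab z.
have Hba : (b == a) = false by rewrite eq_sym; apply/negbTE.
case: (eqVneq z a) => [->|Na]; rewrite /=; first by rewrite eqxx; case: eqP => // E; rewrite E eqxx in Hab.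
case: (eqVneq z b) => [->|Nb]; first by rewrite eqxx.
by rewrite (negbTE Na) (negbTE Nb).
Qed.

Lemma occ_inj t : injective (occ n w typ prop t).
Proof.
elim: t => [|t IH] /=; first exact: inj_id.
rewrite /step; case: ifP => _ //.
have Hc := can_inj (@tr_invol _ _ (Hprop t)).
move=> x y; rewrite /swap_occ => E; apply: IH; move: E; apply: Hc.
Qed.

Notation occ := (occ n w typ prop).
Notation biasT t := (bias n w typ (occ t)).

Lemma unhappy_at o (k : nat) : injective o -> (k < n)%N ->
  unhappy_ind n w typ o (o k) = unhappy_node n w typ o k%:Z.
Proof.
move=> Hi Hk; apply/existsP/idP.
- by case=> k' /andP[/eqP /Hi E U]; rewrite -E.
- by move=> U; exists (Ordinal Hk); rewrite eqxx.
Qed.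

Lemma stay t a : (forall u, (u < t)%N -> ~~ satisfied_at n w typ prop u a) ->
  occ t a = a.
Proof.
elim: t => [|t IH] H //=.
have E : occ t a = a by apply: IH => u Hu; apply: H; lia.
have Hs := H t (leqnn _).
rewrite /step; case: ifP => //= /and3P[U1 U2 T12].
rewrite /swap_occ E.
move: Hs; rewrite /satisfied_at.
case: (eqVneq a (prop t).1) => [Ea|N1].
  have T21 : typ (prop t).2 != typ (prop t).1 by rewrite eq_sym.
  by rewrite Ea eqxx U2 T21.
case: (eqVneq a (prop t).2) => [Eb|N2].
  by rewrite Eb eqxx U1 T12 orbT.
by [].
Qed.

Lemma persist_step t (k : nat) : (k < n)%N -> 0 < biasT t k%:Z ->
  typ (occ t k) -> typ (occ t.+1 k).
Proof.
move=> Hk Hb Ht /=; rewrite /step; case: ifP => //= /and3P[U1 U2 T12].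
rewrite /swap_occ.
case: eqP => E1.
  move: U1; rewrite -E1 unhappy_at //; last exact: occ_inj.
  by rewrite /unhappy_node lab_nat // Ht leNgt Hb.
case: eqP => E2 //.
move: U2; rewrite -E2 unhappy_at //; last exact: occ_inj.
by rewrite /unhappy_node lab_nat // Ht leNgt Hb.
Qed.

Lemma persist t T (k : nat) : (t <= T)%N -> (k < n)%N ->
  (forall u, (t <= u < T)%N -> 0 < biasT u k%:Z) ->
  typ (occ t k) -> typ (occ T k).
Proof.
move=> HtT Hk Hb; elim: T HtT Hb => [|T IH] HtT Hb Ht.
  have E : t = 0%N by lia.
  by rewrite E in Ht.
case: (leqP t T) => H.
  apply: persist_step => //; first by apply: Hb; lia.
  by apply: IH => // u Hu; apply: Hb; lia.
have E : t = T.+1 by lia.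
by rewrite E in Ht.
Qed.

Lemma inv_o t (k : nat) : (k < n)%N -> ~~ typ k ->
  (forall u, (u < t)%N -> 0 < biasT u k%:Z) ->
  occ t k = k \/ typ (occ t k).
Proof.
move=> Hk Htk; elim: t => [|t IH] Hb; first by left.
case: IH => [u Hu|E|Ht]; first by apply: Hb; lia.
- rewrite /= /step; case: ifP => //= [/and3P[U1 U2 T12]|_]; last by left.
  rewrite /swap_occ E.
  case: eqP => [E1|N1]; first by right; move: T12; rewrite -E1; case: (typ k) Htk; case: typ.
  case: eqP => [E2|N2]; last by left.
  by right; move: T12; rewrite -E2; case: (typ k) Htk; case: typ.
- by right; apply: persist_step => //; apply: Hb.
Qed.

Lemma sat_o T (k : nat) u : (k < n)%N -> ~~ typ k ->
  (forall v, (v < T)%N -> 0 < biasT v k%:Z) -> (u < T)%N ->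
  satisfied_at n w typ prop u k -> typ (occ T k).
Proof.
move=> Hk Htk Hb HuT Hs.
apply: (@persist u.+1) => //; first by move=> v Hv; apply: Hb; lia.
case: (@inv_o u k) => // [v Hv|E|Ht]; first by apply: Hb; lia.
- have Uk : unhappy_ind n w typ (occ u) k.
    rewrite -{1}E unhappy_at //; last exact: occ_inj.
    by rewrite /unhappy_node lab_nat // E (negbTE Htk) ltW // Hb.
  move: Hs; rewrite /satisfied_at /= /step.
  case/orP => /andP[/andP[/eqP E1 U] T12].
  + rewrite E1 Uk U /= eq_sym T12 /swap_occ E eqxx.
    by move: T12; case: (typ k) Htk; case: typ.
  + rewrite E1 Uk U /= T12 /swap_occ E.
    have N : (k == (prop u).1) = false.
      by apply/negbTE; rewrite eq_sym -E1; exact: Hprop.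
    rewrite N /= ifT //.
    by move: T12; case: (typ k) Htk; case: typ.
- by apply: persist_step => //; apply: Hb.
Qed.

End Dyn.


Lemma sum_mask (bm : bitseq) (x : seq int) : size bm = size x ->
  \sum_(v <- mask bm x) v = \sum_(i < size x) (if nth false bm i then x`_i else 0).
Proof.
elim: x bm => [|v x IH] [|c bm] //= H.
  by rewrite big_nil big_ord0.
rewrite big_ord_recl /=; case: c => /=.
  by rewrite big_cons IH //; case: H.
by rewrite add0r IH //; case: H.
Qed.

Lemma sum_maskN (bm : bitseq) (x : seq int) N : size bm = N -> size x = N ->
  \sum_(v <- mask bm x) v = \sum_(i < N) (if nth false bm i then x`_i else 0).
Proof. move=> E1 E2; move: E1; rewrite -E2 => E1; exact: sum_mask. Qed.

Lemma mask_eq_nth (bm : bitseq) (x y : seq int) : size bm = size x -> size x = size y ->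
  mask bm x = mask bm y -> forall i, nth false bm i -> x`_i = y`_i.
Proof.
elim: x y bm => [|v x IH] [|u y] [|c bm] //= H1 H2.
case: c => /= [[-> E]|E] [|i] //=.
- by apply: (IH y bm _ _ E); [case: H1 | case: H2].
- by apply: (IH y bm _ _ E); [case: H1 | case: H2].
Qed.

Section Tr.
Variables (n w : nat) (typ : nat -> bool) (prop : nat -> nat * nat).

Definition sb T a := [exists u : 'I_T, satisfied_at n w typ prop u a].

Lemma sb_mono T T' a : (T <= T')%N -> sb T a -> sb T' a.
Proof.
move=> H /existsP[u Hu]; apply/existsP.
by exists (widen_ord H u).
Qed.

Lemma transcript_nonneg T t0 (L : seq nat) (sq : seq int) :
  (T <= t0.+1)%N ->
  (forall i j : nat, (i < j < size L)%N ->
      sat_le n w typ prop (nth 0%N L j) (nth 0%N L i)) ->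
  let sg := [seq sgnb (typ a) | a <- L] in
  let mk := [seq ~~ sat_by n w typ prop t0 a | a <- L] in
  size sq = size L ->
  perm_eq (mask mk sq) (mask mk sg) ->
  mask [seq ~~ b | b <- mk] sq = mask [seq ~~ b | b <- mk] sg ->
  partial_sums_nonneg sq ->
  0 <= \sum_(a <- L) (if sb T a then 0 else sgnb (typ a)).
Proof.
move=> HT Hsort sg mk Hsz Hperm Hmask Hps.
set K := find (sb T) L.
have HK : (K <= size L)%N by apply: find_size.
have Hpre : forall i, (i < size L)%N -> sb T (nth 0%N L i) = (K <= i)%N.
  move=> i Hi; case: (ltnP i K) => HiK.
    by rewrite (before_find _ HiK).
  have HKs : (K < size L)%N by lia.
  have HsK : sb T (nth 0%N L K) by apply: nth_find; rewrite has_find.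
  case: (eqVneq i K) => [->//|NiK].
  have Hle := Hsort K i.
  have Hij : (K < i < size L)%N by apply/andP; split; lia.
  move: HsK; rewrite /sb.
  case: (posnP T) => [->|Tpos]; first by case/existsP => -[].
  rewrite -(ltn_predK Tpos) => H; exact: (Hle Hij _ H).
have Hmk : forall i, (i < size L)%N -> nth false mk i -> (i < K)%N.
  move=> i Hi; rewrite (nth_map 0%N) // => Hn.
  rewrite ltnNge -Hpre //; apply/negP => Hs.
  by move/negP: Hn; apply; exact: (@sb_mono T t0.+1 _ HT Hs).
have Hsum : \sum_(a <- L) (if sb T a then 0 else sgnb (typ a)) =
    \sum_(i < size L) (if (i < K)%N then sg`_i else 0).
  rewrite (big_nth 0%N) big_mkord; apply: eq_bigr => i _.
  rewrite Hpre // leqNgt (nth_map 0%N) //.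
  by case: (i < K)%N.
have Hsq : \sum_(i < K) sq`_i = \sum_(i < size L) (if (i < K)%N then sq`_i else 0).
  rewrite (big_ord_widen (size L) (fun i => sq`_i) HK) big_mkcond //.
have Hsplit : forall x : seq int,
    \sum_(i < size L) (if (i < K)%N then x`_i else 0) =
    \sum_(i < size L) (if nth false mk i then x`_i else 0) +
    \sum_(i < size L) (if (i < K)%N && ~~ nth false mk i then x`_i else 0).
  move=> x; rewrite -big_split /=; apply: eq_bigr => i _.
  have := Hmk i (ltn_ord i).
  by case: (nth false mk i); case: (i < K)%N => //= H; rewrite ?addr0 ?add0r //; have := H isT.
have Ssz : size sg = size L by rewrite size_map.
have Msz : size mk = size L by rewrite size_map.
have E1 : \sum_(i < size L) (if nth false mk i then sq`_i else 0) =
          \sum_(i < size L) (if nth false mk i then sg`_i else 0).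
  rewrite -(@sum_maskN mk sq) // -(@sum_maskN mk sg) //.
  exact: perm_big.
have E2 : \sum_(i < size L) (if (i < K)%N && ~~ nth false mk i then sq`_i else 0) =
          \sum_(i < size L) (if (i < K)%N && ~~ nth false mk i then sg`_i else 0).
  apply: eq_bigr => i _; case: ifP => // /andP[_ Hn].
  apply: (@mask_eq_nth _ sq sg _ _ Hmask); rewrite ?size_map ?Hsz //.
  by rewrite (nth_map false) ?Msz.
rewrite Hsum Hsplit -E1 -E2 -Hsplit -Hsq.
by apply: Hps; rewrite Hsz.
Qed.

End Tr.


Lemma const_sum w : \sum_(q < (2*w).+1) (if (q < w)%N then -1 else 1 : int) = 1.
Proof.
rewrite -(big_mkord xpredT (fun q => if (q < w)%N then -1 else 1 : int)).
rewrite (big_cat_nat (leq0n w) (_ : (w <= (2*w).+1)%N)) /=; last lia.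
rewrite (eq_big_nat _ _ (F2 := fun _ => -1 : int)); last by move=> i /andP[_ ->].
rewrite [X in _ + X](eq_big_nat _ _ (F2 := fun _ => 1 : int)); last first.
  by move=> i /andP[H _]; rewrite ltnNge H.
rewrite !sumr_const_nat.
have -> : ((2*w).+1 - w = w.+1)%N by lia.
by rewrite subn0 mulNrn -addn1 natrD addrA addNr add0r.
Qed.

Lemma sum_shift (h : nat -> int) N j : (j <= N)%N ->
  (forall q, (N <= q)%N -> h q = 0) -> (forall q, (q < j)%N -> 0 <= h q) ->
  \sum_(l < N) h (j + l)%N <= \sum_(q < N) h q.
Proof.
move=> HjN Hz Hnn.
rewrite -(big_mkord xpredT (fun l => h (j + l)%N)) -(big_mkord xpredT h).
have E1 : \sum_(0 <= l < N) h (j + l)%N = \sum_(0 <= l < N - j) h (j + l)%N.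
  rewrite (big_cat_nat (leq0n (N-j)) (leq_subr j N)) /=.
  rewrite [X in _ + X]big1_seq ?addr0 // => l /andP[_]; rewrite mem_iota => /andP[H1 H2].
  apply: Hz; lia.
have E2 : \sum_(0 <= q < N) h q = \sum_(0 <= q < j) h q + \sum_(0 <= l < N - j) h (j + l)%N.
  rewrite (big_cat_nat (leq0n j) HjN) /=; congr (_ + _).
  rewrite -{1}(add0n j) big_addn; apply: eq_bigr => l _; by rewrite addnC.
rewrite E1 E2 addrC lerDl big_nat_cond.
by apply: sumr_ge0 => q /andP[/andP[_ Hq] _]; apply: Hnn.
Qed.

Section Side.
Variables (n w : nat) (typ : nat -> bool) (prop : nat -> nat * nat) (m : nat) (b d : int).
Hypothesis n_gt0 : (0 < n)%N.
Hypothesis Hprop : forall t, (prop t).1 != (prop t).2.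
Hypothesis Hd : d = 1 \/ d = -1.
Hypothesis Hmn : (m + 2 * w <= n)%N.
Hypothesis Hm : (2 * w + 2 <= m)%N.

Definition kq (q : nat) := node n (b + d * (q%:Z - w%:Z)).
Definition cq (q : nat) := if (q < w)%N then typ (kq q) else ~~ typ (kq q).
Definition combG (a : nat) :=
  ([exists q : 'I_w, a == kq q] && typ a) ||
  ([exists q : 'I_w.+1, a == kq (w + q)] && ~~ typ a).

Lemma biasD o i : bias n w typ o i =
  \sum_(l < (2*w).+1) sgnb (lab n typ o (i + d * (l%:Z - w%:Z))).
Proof.
case: Hd => ->.
  by apply: eq_bigr => l _; congr (sgnb (lab _ _ _ _)); lia.
rewrite (reindex_inj rev_ord_inj) /=; apply: eq_bigr => l _.
congr (sgnb (lab _ _ _ _)); have := ltn_ord l; lia.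
Qed.

Lemma kq_inj q q' : (q < (2*w).+1)%N -> (q' < (2*w).+1)%N -> kq q = kq q' -> q = q'.
Proof.
move=> Hq Hq' E.
have : modz (b + d * (q%:Z - w%:Z)) n = modz (b + d * (q'%:Z - w%:Z)) n.
  by rewrite -!nodeZ // -/(kq q) -/(kq q') E.
move/eqP; rewrite eqz_mod_dvd dvdzE.
have -> : absz ((b + d * (q%:Z - w%:Z)) - (b + d * (q'%:Z - w%:Z)))%R = absz (q%:Z - q'%:Z)%R.
  by case: Hd => ->; lia.
case: (eqVneq q q') => // N /dvdn_leq.
have H0 : (0 < absz (q%:Z - q'%:Z)%R)%N by move: N; lia.
move=> /(_ H0); lia.
Qed.

Lemma sumL (L : seq nat) (f : nat -> int) : uniq L -> (forall a, (a \in L) = combG a) ->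
  \sum_(a <- L) f a = \sum_(q < (2*w).+1 | cq q) f (kq q).
Proof.
move=> Hu HL.
have Hp : perm_eq L [seq kq q | q <- [seq q <- iota 0 (2*w).+1 | cq q]].
  apply: uniq_perm => //.
    rewrite map_inj_in_uniq ?filter_uniq ?iota_uniq //.
    move=> q q'; rewrite !mem_filter !mem_iota => /andP[_ Hq] /andP[_ Hq'].
    by apply: kq_inj; lia.
  move=> a; rewrite HL; apply/idP/mapP.
    case/orP => /andP[/existsP[q /eqP ->] Ht].
      exists (q : nat) => //; rewrite mem_filter mem_iota /cq ltn_ord Ht /=. have := ltn_ord q; lia.
    exists (w + q)%N => //; rewrite mem_filter mem_iota /cq.
    have -> : (w + q < w)%N = false by lia.
    rewrite Ht /=; have := ltn_ord q; lia.
  case=> q; rewrite mem_filter mem_iota => /andP[Hc Hq] ->.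
  rewrite /cq in Hc; case: ifP Hc => Hqw Hc.
    by rewrite /combG Hc andbT; apply/orP; left; apply/existsP; exists (Ordinal Hqw).
  rewrite /combG Hc andbT; apply/orP; right; apply/existsP.
  have Hq2 : (q - w < w.+1)%N by lia.
  exists (Ordinal Hq2); rewrite /= subnKC //; lia.
rewrite -(big_mkord cq (fun q => f (kq q))) -big_filter -(big_map kq xpredT f); exact: (perm_big _ Hp).
Qed.

Variable T : nat.
Hypothesis HInv : forall v, (v < T)%N -> forall p, (p < m)%N ->
  0 < bias n w typ (occ n w typ prop v) (b + d * p%:Z).

Lemma Fpos v q : (v < T)%N -> (w <= q < w + m)%N ->
  0 < bias n w typ (occ n w typ prop v) (kq q)%:Z.
Proof.
move=> Hv /andP[H1 H2]; rewrite (bias_node _ _ _ n_gt0).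
rewrite (subzn H1); apply: HInv => //; lia.
Qed.

Definition hq (q : nat) : int :=
  if [&& (q < (2*w).+1)%N, cq q & sb n w typ prop T (kq q)] then sgnb (typ (kq q)) else 0.

Lemma pw q : (q < w + m)%N ->
  sgnb (typ (kq q)) - 2 * hq q <= sgnb (typ (occ n w typ prop T (kq q))).
Proof.
move=> Hq; rewrite /hq /cq.
have Hkn : (kq q < n)%N by apply: node_lt.
case Htk : (typ (kq q)).
  case: ifP => [_|Hc].
    by case: (typ _).
  suff -> : typ (occ n w typ prop T (kq q)) by [].
  case: (ltnP q w) => Hqw.
    have Hq2 : (q < (2*w).+1)%N by lia.
    rewrite Hqw Hq2 /= in Hc.
    have Hns : ~~ sb n w typ prop T (kq q) by rewrite Hc.
    rewrite (@stay n w typ prop n_gt0) ?Htk // => u Hu.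
    apply/negP => Hs; move/negP: Hns; apply; apply/existsP; by exists (Ordinal Hu).
  apply: (@persist n w typ prop n_gt0 Hprop 0%N) => //.
  by move=> u /andP[_ Hu]; apply: Fpos => //; apply/andP; split.
case: ifP => [/and3P[_ Hc Hs]|_]; last by case: (typ _).
case: (ltnP q w) => Hqw; first by rewrite Hqw in Hc.
case/existsP: Hs => u Hu.
have -> : typ (occ n w typ prop T (kq q)).
  apply: (@sat_o n w typ prop n_gt0 Hprop T (kq q) u) => //.
  - by rewrite Htk.
  - by move=> v Hv; apply: Fpos => //; apply/andP; split.
by [].
Qed.

Lemma lab_kq o j (l : nat) :
  lab n typ o (b + d * j%:Z + d * (l%:Z - w%:Z)) = typ (o (kq (j + l)%N)).
Proof. by rewrite /lab /kq PoszD; congr (typ (o (node n _))); ring. Qed.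

Lemma bias_lower j : (j <= w)%N ->
  bias n w typ id (b + d * j%:Z) - 2 * \sum_(l < (2*w).+1) hq (j + l)%N
  <= bias n w typ (occ n w typ prop T) (b + d * j%:Z).
Proof.
move=> Hj; rewrite !biasD mulr_sumr -sumrB; apply: ler_sum => l _.
rewrite !lab_kq; apply: pw; have := ltn_ord l; lia.
Qed.

Lemma side_pos j t0 (L : seq nat) (sq : seq int) :
  (T <= t0.+1)%N ->
  uniq L -> (forall a, (a \in L) = combG a) ->
  (forall i j : nat, (i < j < size L)%N ->
      sat_le n w typ prop (nth 0%N L j) (nth 0%N L i)) ->
  let sg := [seq sgnb (typ a) | a <- L] in
  let mk := [seq ~~ sat_by n w typ prop t0 a | a <- L] in
  size sq = size L ->
  perm_eq (mask mk sq) (mask mk sg) ->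
  mask [seq ~~ b | b <- mk] sq = mask [seq ~~ b | b <- mk] sg ->
  partial_sums_nonneg sq ->
  (forall j, (j <= w)%N -> bias n w typ id b <= bias n w typ id (b + d * j%:Z)) ->
  (j <= w)%N -> 0 < bias n w typ (occ n w typ prop T) (b + d * j%:Z).
Proof.
move=> HT Hu HL Hsort sg mk Hsz Hperm Hmask Hps Hinc Hj.
have HY := @transcript_nonneg n w typ prop T t0 L sq HT Hsort Hsz Hperm Hmask Hps.
set Y := \sum_(a <- L) _ in HY.
set X := \sum_(a <- L) (if sb n w typ prop T a then sgnb (typ a) else 0).
set S := \sum_(a <- L) sgnb (typ a).
have HS : S = X + Y.
  rewrite /S /X /Y -big_split /=; apply: eq_bigr => a _; by case: sb; rewrite ?addr0 ?add0r.
have HX : \sum_(l < (2*w).+1) hq (j + l)%N <= X.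
  have -> : X = \sum_(q < (2*w).+1) hq q.
    rewrite /X (@sumL L _ Hu HL) big_mkcond /=; apply: eq_bigr => q _.
    by rewrite /hq ltn_ord /=; case: (cq q).
  apply: sum_shift; first by lia.
    by move=> q Hq; rewrite /hq; have -> : (q < (2*w).+1)%N = false by lia.
  move=> q Hq; rewrite /hq /cq; have -> : (q < w)%N by lia.
  by case: ifP => // /and3P[_ -> _].
have HB0 : bias n w typ id b = 2 * S + 1.
  have -> : bias n w typ id b = \sum_(q < (2*w).+1)
      (2 * (if cq q then sgnb (typ (kq q)) else 0) + (if (q < w)%N then -1 else 1)).
    rewrite biasD; apply: eq_bigr => q _.
    have -> : b + d * ((q : nat)%:Z - w%:Z) = b + d * 0%N%:Z + d * ((q : nat)%:Z - w%:Z) by ring.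
    rewrite lab_kq add0n /cq; case: (q < w)%N; case: typ => //.
  by rewrite big_split /= const_sum -mulr_sumr -big_mkcond /S (@sumL L _ Hu HL).
have := @bias_lower j Hj; have := Hinc j Hj.
rewrite HB0 HS => H1 H2.
lia.
Qed.

Lemma mono q : (w <= q < w + m)%N ->
  sgnb (typ (kq q)) <= sgnb (typ (occ n w typ prop T (kq q))).
Proof.
move=> Hq; have Hkn : (kq q < n)%N by apply: node_lt.
case Htk : (typ (kq q)); last by case: typ.
suff -> : typ (occ n w typ prop T (kq q)) by [].
apply: (@persist n w typ prop n_gt0 Hprop 0%N) => //.
by move=> u /andP[_ Hu]; apply: Fpos.
Qed.

Lemma mid_pos j : (w <= j)%N -> (j + w < m)%N ->
  bias n w typ id (b + d * j%:Z) <= bias n w typ (occ n w typ prop T) (b + d * j%:Z).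
Proof.
move=> H1 H2; rewrite !biasD; apply: ler_sum => l _.
rewrite !lab_kq; apply: mono; have := ltn_ord l; lia.
Qed.

End Side.


Lemma left_comb_eq n w typ s m a :
  left_combatant n w typ s m a = combG n w typ s 1 a.
Proof.
rewrite /left_combatant /combG /in_block /kq.
congr (_ && _ || _ && _); apply: eq_existsb => q; congr (a == node n _); lia.
Qed.

Lemma right_comb_eq n w typ s m a :
  right_combatant n w typ s m a = combG n w typ (s + m%:Z - 1) (-1) a.
Proof.
rewrite /right_combatant /combG /in_block /kq.
congr (_ && _ || _ && _); apply/existsP/existsP => -[q /eqP ->];
  exists (rev_ord q); apply/eqP; congr (node n _); rewrite /=; have := ltn_ord q; lia.
Qed.

Lemma final n w typ prop s m T : (0 < n)%N ->
  (forall t, (prop t).1 != (prop t).2) ->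
  (forall t, (t <= T)%N -> forall p, (p < m)%N ->
     0 < bias n w typ (occ n w typ prop t) (s + p%:Z)) ->
  no_impatient_in_F n w typ prop s m T ->
  forall j, (j < m)%N -> lab n typ (occ n w typ prop T) (s + j%:Z) = true.
Proof.
move=> n_gt0 Hprop Hinv HnoI j Hj.
set k := node n (s + j%:Z).
have Hk : (k < n)%N by apply: node_lt.
have Hb : forall v, (v <= T)%N -> 0 < bias n w typ (occ n w typ prop v) k%:Z.
  by move=> v Hv; rewrite bias_node //; apply: Hinv.
rewrite /lab -/k.
case Ht : (typ (occ n w typ prop T k)) => //.
have Htk : ~~ typ k.
  apply/negP => Htk; move: Ht.
  have -> // : typ (occ n w typ prop T k).
  apply: (@persist n w typ prop n_gt0 Hprop 0%N) => //.
  by move=> u /andP[_ Hu]; apply: Hb; lia.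
have E : occ n w typ prop T k = k.
  case: (@inv_o n w typ prop n_gt0 Hprop T k Hk Htk) => //.
    by move=> u Hu; apply: Hb; lia.
  by rewrite Ht.
have Hblk : in_block n s m k by apply/existsP; exists (Ordinal Hj).
have := HnoI k Hk Hblk; rewrite E /impatient.
have -> : unhappy_ind n w typ (occ n w typ prop T) k.
  rewrite -{1}E unhappy_at //; last exact: occ_inj.
  rewrite /unhappy_node lab_nat // E (negbTE Htk) ltW //.
  exact: Hb.
rewrite /= negbK => /existsP[u Hu].
move: Ht; have -> // : typ (occ n w typ prop T k).
apply: (@sat_o n w typ prop n_gt0 Hprop T k u) => //.
by move=> v Hv; apply: Hb; lia.
Qed.

Theorem proposition3 (n w : nat) (typ : nat -> bool) (prop : nat -> nat * nat)
    (s : int) (m : nat) :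
  (0 < w)%N -> (m + 2 * w <= n)%N ->
  (forall t, [/\ ((prop t).1 < n)%N, ((prop t).2 < n)%N & (prop t).1 != (prop t).2]) ->
  x_firewall_incubator n w typ s m ->
  (exists sq, pseudo_transcript n w typ prop s m (left_combatant n w typ s m) sq
              /\ partial_sums_nonneg sq) ->
  (exists sq, pseudo_transcript n w typ prop s m (right_combatant n w typ s m) sq
              /\ partial_sums_nonneg sq) ->
  exists t : nat, forall j : nat, (j < m)%N ->
    lab n typ (occ n w typ prop t) (s + j%:Z) = true.
Proof.
move=> Hw Hmn Hpr [Hm Hpos Hincl Hincr].
move=> [sqL [[t0L [LL [HnoL HuL HmemL HsortL [HszL HpermL HmaskL]]]] HpsL]].
move=> [sqR [[t0R [LR [HnoR HuR HmemR HsortR [HszR HpermR HmaskR]]]] HpsR]].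
have n_gt0 : (0 < n)%N by lia.
have Hprop : forall t, (prop t).1 != (prop t).2 by move=> t; case: (Hpr t).
set T := minn t0L t0R.
have Hall : forall t, (t <= T)%N ->
    (forall v, (v < t)%N -> forall p, (p < m)%N ->
       0 < bias n w typ (occ n w typ prop v) (s + p%:Z)) ->
    forall p, (p < m)%N -> 0 < bias n w typ (occ n w typ prop t) (s + p%:Z).
  move=> t HtT IH p Hp.
  case: (leqP p w) => Hpw.
    have E : s + p%:Z = s + 1 * p%:Z by rewrite mul1r.
    rewrite E.
    have := @side_pos n w typ prop m s 1 n_gt0 Hprop (or_introl erefl) Hmn Hm t _ p t0L LL sqL _ HuL _ HsortL HszL HpermL HmaskL HpsL _ Hpw.
    rewrite mul1r; apply.
    - by move=> v Hv p' Hp'; rewrite mul1r; apply: IH.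
    - rewrite /T in HtT; lia.
    - by move=> a; rewrite HmemL left_comb_eq.
    - by move=> j' Hj'; rewrite mul1r; apply: Hincl.
  case: (leqP (m - 1 - w)%N p) => Hpr2.
    have E : s + p%:Z = s + m%:Z - 1 + -1 * (m - 1 - p)%N%:Z by lia.
    rewrite E.
    apply: (@side_pos n w typ prop m (s + m%:Z - 1) (-1) n_gt0 Hprop (or_intror erefl) Hmn Hm t _ (m - 1 - p)%N t0R LR sqR _ HuR _ HsortR HszR HpermR HmaskR HpsR).
    - move=> v Hv p' Hp'.
      have E' : s + m%:Z - 1 + -1 * p'%:Z = s + (m - 1 - p')%N%:Z by lia.
      rewrite E'; apply: IH => //; lia.
    - rewrite /T in HtT; lia.
    - by move=> a; rewrite HmemR right_comb_eq.
    - move=> j' Hj'.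
      have E' : s + m%:Z - 1 + -1 * j'%:Z = s + m%:Z - 1 - j'%:Z by lia.
      rewrite E'; exact: Hincr.
    - lia.
  have H0 := (Hpos p Hp).1.
  have := @mid_pos n w typ prop m s 1 n_gt0 Hprop (or_introl erefl) Hmn Hm t _ p _ _.
  rewrite !mul1r => H; apply: (lt_le_trans H0); apply: H.
  - by move=> v Hv p' Hp'; rewrite mul1r; apply: IH.
  - lia.
  - lia.
have HI : forall t, (t <= T)%N -> forall v, (v <= t)%N -> forall p, (p < m)%N ->
    0 < bias n w typ (occ n w typ prop v) (s + p%:Z).
  elim=> [|t IHt] HtT v Hv.
    have -> : v = 0%N by lia.
    by apply: Hall => // u Hu; lia.
  case: (ltnP v t.+1) => Hvt.
    apply: IHt; lia.
  have -> : v = t.+1 by lia.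
  apply: Hall => // u Hu; apply: IHt; lia.
exists T.
have HnoT : no_impatient_in_F n w typ prop s m T.
  case: (leqP t0L t0R) => H.
    by have -> : T = t0L by rewrite /T; lia.
  by have -> : T = t0R by rewrite /T; lia.
apply: (@final n w typ prop s m T n_gt0 Hprop _ HnoT).
by move=> t Ht; apply: (HI T (leqnn _)).
Qed.
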